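(* Let $A$ be an $n\times n$ $(0,1)$-matrix, and let $\Phi$ be a depth-$2$ circuit with $L$ wires computing the linear operator $f_A(\vec x)=A\vec x$ over $GF(2)$. Suppose every output node of $\Phi$ computes a linear boolean function. Then there is a depth-$2$ circuit $\Phi'$ that computes $f_A$, has at most $L+2n$ wires, and in which every non-input node computes a linear boolean function.
   Context: A depth-$2$ circuit has $n$ input nodes $x_1,\dots,x_n$, a set of middle nodes, and $n$ output nodes $y_1,\dots,y_n$. Wires go only from inputs to middle nodes, from middle nodes to outputs, or from inputs directly to outputs. Each non-input node may compute an arbitrary boolean function of the values at its in-neighbours, with no restriction on fanin or fanout. The circuit computes $f=(f_1,\dots,f_n)$ if the function at $y_i$ equals $f_i$ for all $i$. A boolean function is linear if it is the sum modulo $2$ of some subset of its arguments (the empty sum is allowed) or the negation of such a sum. The number of wires is the number of edges of the circuit. *)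

(* Defs.v *)
From mathcomp Require Import all_boot all_order all_algebra.
Unset Strict Implicit. Unset Printing Implicit Defensive.

(* Wires: input->middle (wIM), middle->output (wMO), input->output (wIO).
   gmid j : the boolean function at middle node j, given the input values.
   gout k : the boolean function at output k, given the values of all
            potential in-neighbours (inputs inl i, middle nodes inr j). *)
Record circuit (n : nat) := Circuit {
  nmid : nat;
  wIM : 'I_n -> 'I_nmid -> bool;
  wMO : 'I_nmid -> 'I_n -> bool;
  wIO : 'I_n -> 'I_n -> bool;
  gmid : 'I_nmid -> ('I_n -> bool) -> bool;
  gout : 'I_n -> ('I_n + 'I_nmid -> bool) -> bool }.
Arguments nmid {n}. Arguments wIM {n}. Arguments wMO {n}. Arguments wIO {n}.
Arguments gmid {n}. Arguments gout {n}.

Definition depends_only {T : Type} (D : pred T) (f : (T -> bool) -> bool) :=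
  forall v v' : T -> bool, (forall t, D t -> v t = v' t) -> f v = f v'.

(* f is a linear boolean function of its arguments D: the mod-2 sum of
   some subset S of D, or the negation of such a sum. *)
Definition linear_on {T : finType} (D : pred T) (f : (T -> bool) -> bool) :=
  exists (S : {set T}) (c : bool),
    {subset S <= D} /\ forall v, f v = c (+) \big[addb/false]_(t in S) v t.

Definition mid_in {n} (C : circuit n) (j : 'I_(nmid C)) : pred 'I_n :=
  fun i => wIM C i j.
Definition out_in {n} (C : circuit n) (k : 'I_n) : pred ('I_n + 'I_(nmid C)) :=
  fun u => match u with inl i => wIO C i k | inr j => wMO C j k end.

Definition wf_circuit {n} (C : circuit n) :=
  (forall j, depends_only (mid_in C j) (gmid C j)) /\
  (forall k, depends_only (out_in C k) (gout C k)).

Definition mid_linear {n} (C : circuit n) (j : 'I_(nmid C)) :=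
  linear_on (mid_in C j) (gmid C j).
Definition out_linear {n} (C : circuit n) (k : 'I_n) :=
  linear_on (out_in C k) (gout C k).

Definition eval_out {n} (C : circuit n) (x : 'I_n -> bool) (k : 'I_n) : bool :=
  gout C k (fun u => match u with inl i => x i | inr j => gmid C j x end).

Definition computes {n} (C : circuit n) (A : 'M[bool]_n) :=
  forall (x : 'I_n -> bool) (k : 'I_n),
    eval_out C x k = \big[addb/false]_(i < n) (A k i && x i).

Definition wires {n} (C : circuit n) : nat :=
  #|[set p : 'I_n * 'I_(nmid C) | wIM C p.1 p.2]|
  + #|[set p : 'I_(nmid C) * 'I_n | wMO C p.1 p.2]|
  + #|[set p : 'I_n * 'I_n | wIO C p.1 p.2]|.

(* Main.v *)
Require Import Defs.
From mathcomp Require Import all_boot all_order all_algebra.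

Lemma big_andl (I : Type) (r : seq I) (P : pred I) (F : I -> bool) b :
  b && \big[addb/false]_(i <- r | P i) F i = \big[addb/false]_(i <- r | P i) (b && F i).
Proof.
elim/big_rec2: _ => [|i y1 y2 _ <-]; first by rewrite andbF.
by case: b.
Qed.

Section Constr.
Variable n : nat.
Variable C : circuit n.

Definition zx : 'I_n -> bool := fun _ => false.
Definition ex (i : 'I_n) : 'I_n -> bool := fun i' => i' == i.
Definition Vof (D : circuit n) (x : 'I_n -> bool) : 'I_n + 'I_(nmid D) -> bool :=
  fun u => match u with inl i => x i | inr j => gmid D j x end.
Definition coef (j : 'I_(nmid C)) (i : 'I_n) := gmid C j (ex i) (+) gmid C j zx.
Definition lin_mid (j : 'I_(nmid C)) (x : 'I_n -> bool) :=
  \big[addb/false]_(i < n) (x i && coef j i).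
Definition C' : circuit n :=
  @Circuit n (nmid C) (wIM C) (wMO C) (wIO C) lin_mid
    (fun k v => gout C k v (+) gout C k (fun _ => false)).
End Constr.
Arguments coef {n}. Arguments lin_mid {n}. Arguments C' {n}. Arguments Vof {n}. Arguments zx {n}. Arguments ex {n}.

Theorem theorem2 (n : nat) (A : 'M[bool]_n) (Phi : circuit n) (L : nat) :
  wf_circuit Phi -> computes Phi A -> wires Phi = L ->
  (forall k, out_linear Phi k) ->
  exists Phi' : circuit n,
    [/\ wf_circuit Phi', computes Phi' A, wires Phi' <= L + 2 * n,
        (forall j, mid_linear Phi' j) & (forall k, out_linear Phi' k)].
Proof.
move=> [Hm Ho] Hc Hw Hl.
have coef0 : forall j i, coef Phi j i -> wIM Phi i j.
  move=> j i; apply: contraTT => Hn; rewrite /coef.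
  rewrite (Hm j (ex i) zx) ?addbb // => t Ht; rewrite /ex /zx.
  by apply/eqP => E; move: Ht; rewrite /mid_in E (negbTE Hn).
exists (C' Phi); split.
- split.
  + move=> j v v' E; rewrite /= /lin_mid; apply: eq_bigr => i _.
    by case Hci: (coef Phi j i); rewrite ?andbF // !andbT E //; apply: coef0.
  + by move=> k v v' E /=; rewrite (Ho k v v' E).
- move=> x k; case: (Hl k) => S [c [HS Hg]].
  rewrite /eval_out /= !Hg.

  rewrite [\big[addb/false]_(t in S) false]big1 // addbF addbAC addbb /=.
  have HS' : forall y, \big[addb/false]_(t in S) Vof Phi y t
                      = c (+) \big[addb/false]_(i < n) (A k i && y i).
    by move=> y; have := Hc y k; rewrite /eval_out Hg => <-; rewrite addKb.
  have HV : forall t, (match t with inl i => x i | inr j => lin_mid Phi j x end)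
     = \big[addb/false]_(i < n) (x i && (Vof Phi (ex i) t (+) Vof Phi zx t)).
    case=> [i'|j]; last by [].
    rewrite /Vof /zx /ex (bigD1 i') ?inE // eqxx addbF andbT big1; first by case: (x i').
    by move=> i Hi; rewrite eq_sym (negbTE Hi) andbF.
  rewrite (eq_bigr _ (fun t _ => HV t)) exchange_big.
  apply: eq_bigr => i _; rewrite -big_andl big_split !HS'.
  have E0 : \big[addb/false]_(i0 < n) (A k i0 && zx i0) = false.
    by apply: big1 => i0 _; rewrite /zx andbF.
  have E1 : \big[addb/false]_(i0 < n) (A k i0 && ex i i0) = A k i.
    rewrite (bigD1 i) ?inE // /ex eqxx andbT big1; first by case: (A k i).
    by move=> i0 H; rewrite (negbTE H) andbF.
  by rewrite E0 E1; clear -c; case: c; case: (A k i); case: (x i).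
- by rewrite -Hw leq_addr.
- move=> j; exists [set i | coef Phi j i], false; split.
  + by move=> i; rewrite inE; apply: coef0.
  + move=> v /=; rewrite /lin_mid [RHS]big_mkcond /=; apply: eq_bigr => i _.
    by rewrite inE; case: (coef Phi j i); rewrite ?andbT ?andbF.
- move=> k; case: (Hl k) => S [c [HS Hg]]; exists S, false; split => // v /=.
  by rewrite !Hg [\big[addb/false]_(t in S) false]big1 // addbF addbAC addbb.
Qed.
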